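(* Fix a finite monoid presentation $\langle A\mid R\rangle$ satisfying $C(4)$. There is an algorithm which, given $w\in A^*$ and a piece $p$, decides whether $w$ is $p$-active in constant time, i.e. in time bounded by a constant depending only on the presentation.
   Context: Relation words are the words occurring as a side of a pair in $R$. A piece is a word that is a factor of two distinct relation words, or occurs at two different (possibly overlapping) positions in a single relation word; $\varepsilon$ is a piece. $C(4)$: no relation word is a product of fewer than 4 pieces. For a relation word $u$, $X_u$ is its longest prefix that is a piece, $Z_u$ its longest suffix that is a piece, and $u=X_uY_uZ_u$ defines $Y_u$. A relation prefix of a word is a prefix of the form $aX_uY_u$ with $a\in A^*$ and $u$ a relation word. For a piece $p$, a word $w$ is $p$-active if $pw$ has a relation prefix $aX_uY_u$ with $|a|<|p|$. *)

(* Defs.v *)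
From mathcomp Require Import all_boot.
Set Implicit Arguments. Unset Strict Implicit. Unset Printing Implicit Defensive.

Section Presentation.
Variable A : finType.
Variable R : seq (seq A * seq A).

Definition relwords : seq (seq A) := flatten [seq [:: r.1; r.2] | r <- R].
Definition is_relword (u : seq A) : bool := u \in relwords.

Definition occurs_at (p u : seq A) (i : nat) : bool :=
  (i + size p <= size u) && (take (size p) (drop i u) == p).

Definition factor (p u : seq A) : bool := infix p u.

Definition is_piece (p : seq A) : bool :=
  [|| p == [::],
      has (fun u => has (fun v => [&& u != v, factor p u & factor p v]) relwords)
          relwords
    | has (fun u => has (fun i => has (fun j =>
             [&& i != j, occurs_at p u i & occurs_at p u j])
             (iota 0 (size u).+1)) (iota 0 (size u).+1)) relwords].

Definition C4 : Prop :=
  forall (u : seq A) (ps : seq (seq A)),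
    is_relword u -> all is_piece ps -> size ps < 4 -> flatten ps != u.

Definition Xlen (u : seq A) : nat :=
  \max_(k < (size u).+1 | is_piece (take k u)) (k : nat).
Definition Zlen (u : seq A) : nat :=
  \max_(k < (size u).+1 | is_piece (drop (size u - k) u)) (k : nat).
Definition X_ (u : seq A) : seq A := take (Xlen u) u.
Definition Z_ (u : seq A) : seq A := drop (size u - Zlen u) u.
(* Y_u defined by u = X_u Y_u Z_u *)
Definition Y_ (u : seq A) : seq A :=
  take (size u - Xlen u - Zlen u) (drop (Xlen u) u).

Definition p_active (p w : seq A) : Prop :=
  exists (a u : seq A),
    [/\ is_relword u, size a < size p & prefix (a ++ X_ u ++ Y_ u) (p ++ w)].

End Presentation.

(* Model of algorithms with random read access to the input word: a decision
   tree which at each step queries the letter at some position i of w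
   (answer None if i >= |w|) and finally outputs a boolean. *)
Inductive dtree (A : Type) : Type :=
| Leaf of bool
| Query of nat & (option A -> dtree A).

(* run the tree on w for at most [fuel] queries; None = time bound exceeded *)
Fixpoint run (A : Type) (t : dtree A) (w : seq A) (fuel : nat) : option bool :=
  match t with
  | Leaf b => Some b
  | Query i k =>
      match fuel with
      | 0 => None
      | n.+1 => run (k (onth w i)) w n
      end
  end.

(* Main.v *)
Require Import Defs.
From mathcomp Require Import all_boot.
Set Implicit Arguments. Unset Strict Implicit.

Fixpoint build (A : Type) (n i : nat) (f : seq A -> bool) : dtree A :=
  match n with
  | 0 => @Leaf A (f [::])
  | n'.+1 => @Query A i (fun o => match o with
                               | Some x => @build A n' i.+1 (fun s => f (x :: s))
                               | None => @Leaf A (f [::]) end)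
  end.

Lemma onth_drop (A : Type) (w : seq A) i :
  onth w i = match drop i w with [::] => None | x :: _ => Some x end.
Proof. by elim: w i => [|x w IH] [|i] //=; rewrite IH. Qed.

Lemma drop_succ (A : Type) (w : seq A) i x s :
  drop i w = x :: s -> drop i.+1 w = s.
Proof. elim: w i => [|y w IH] [|i] //=; [by case=> _ ->; rewrite drop0 | exact: IH]. Qed.

Lemma run_build (A : Type) n i (f : seq A -> bool) w fuel :
  n <= fuel -> run (@build A n i f) w fuel = Some (f (take n (drop i w))).
Proof.
elim: n i f fuel => [|n IH] i f [|fuel] //=; first by rewrite take0.
  by rewrite take0.
move=> Hn; rewrite onth_drop.
case E: (drop i w) => [|x s] /=; first by [].
by rewrite IH // (@drop_succ _ w i x s E).
Qed.

Definition dec (A : finType) (R : seq (seq A * seq A)) (p w : seq A) : bool :=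
  has (fun u => has (fun k => prefix (take k p ++ X_ R u ++ Y_ R u) (p ++ w))
                     (iota 0 (size p))) (relwords R).

Lemma sizeXY (A : finType) (R : seq (seq A * seq A)) u :
  size (X_ R u ++ Y_ R u) <= size u.
Proof. by rewrite /X_ /Y_ -takeD size_take_min geq_minr. Qed.

Lemma dec_active (A : finType) (R : seq (seq A * seq A)) p w :
  reflect (p_active R p w) (dec R p w).
Proof.
apply: (iffP hasP) => [[u Hu /hasP [k]]|[a [u [Hu Ha Hp]]]].
  rewrite mem_iota add0n => /andP [_ Hk] Hpre.
  exists (take k p), u; split => //.
  by rewrite size_take_min (leq_ltn_trans (geq_minl _ _)).
exists u => //; apply/hasP; exists (size a); first by rewrite mem_iota.
have Ha' : a = take (size a) p.
  move: Hp; rewrite prefixE => /eqP /(congr1 (take (size a))).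
  rewrite take_takel ?size_cat ?leq_addr // take_cat Ha.
  by rewrite (@take_size_cat _ (size a)) // => <-.
by rewrite -Ha'.
Qed.

Lemma dec_take (A : finType) (R : seq (seq A * seq A)) p w M :
  (forall u, u \in relwords R -> size u <= M) ->
  dec R p w = dec R p (take M w).
Proof.
move=> HM; apply: eq_in_has => u Hu; apply: eq_in_has => k.
rewrite mem_iota add0n => /andP [_ Hk].
rewrite !prefixE.
have Hs : size (take k p ++ X_ R u ++ Y_ R u) <= size p + M.
  rewrite size_cat size_take_min leq_add ?geq_minr //.
  exact: leq_trans (sizeXY R u) (HM u Hu).
have -> : p ++ take M w = take (size p + M) (p ++ w).
  by rewrite take_cat ltnNge leq_addr /= addKn.
by rewrite take_takel.
Qed.

Theorem lemma6p16 (A : finType) (R : seq (seq A * seq A)) :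
  C4 R ->
  exists (c : nat) (T : seq A -> dtree A),
    forall (p w : seq A), is_piece R p ->
      exists b : bool, run (T p) w c = Some b /\ (b <-> p_active R p w).
Proof.
move=> _.
pose M := \max_(u <- relwords R) size u.
have HM : forall u, u \in relwords R -> size u <= M.
  by move=> u Hu; apply: (@leq_bigmax_seq _ _ xpredT size u Hu).
exists M, (fun p => @build A M 0 (dec R p)) => p w _.
exists (dec R p (take M w)); split.
  by rewrite run_build // drop0.
rewrite -dec_take //; split; by move/dec_active.
Qed.
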